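(* Let $S_0,\dots,S_{k-1}$ be martingales on $2^{<\omega}$ and let $c>\max_{j<k}S_j(\bot)+\frac12\sum_{j<k}\sqrt{\mathrm{Var}(S_j\mid\bot)}$. Then there exists a martingale $S^*$ with $S^*(\bot)<c$ such that $S^*(\rho)>\max_{j<k}S_j(\rho)$ for all $\rho\in2^{<\omega}$. Moreover, $S^*$ can be taken bounded if each $S_j$ is bounded.
   Context: A martingale is a function $S:2^{<\omega}\to\mathbb{R}^{\ge0}$ with $2S(\rho)=S(\rho0)+S(\rho1)$ for all $\rho$; $\bot$ is the empty string. For a martingale $S$ and $\rho\in2^{<\omega}$, $\mathrm{Var}(S\mid\rho)=\lim_{t\to\infty}2^{-(t-|\rho|)}\sum_{\sigma\in 2^t,\ \sigma\succeq\rho}(S(\sigma)-S(\rho))^2$. A function is bounded if its range is a bounded subset of $\mathbb{R}$. *)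

(* Defs.v *)
From HB Require Import structures.
From mathcomp Require Import all_boot all_order all_algebra.
From mathcomp Require Import all_classical all_reals all_analysis.
Set Implicit Arguments. Unset Strict Implicit. Unset Printing Implicit Defensive.
Import Order.TTheory GRing.Theory Num.Theory numFieldNormedType.Exports.
Local Open Scope ring_scope.

(* Binary strings 2^{<omega} are [seq bool]; the empty string (bot) is [::];
   the extension rho0 / rho1 is [rcons rho false] / [rcons rho true]. *)

Definition martingale {R : realType} (S : seq bool -> R) : Prop :=
  forall rho : seq bool,
    0 <= S rho /\ 2 * S rho = S (rcons rho false) + S (rcons rho true).

Definition var_approx {R : realType} (S : seq bool -> R) (rho : seq bool)
  (t : nat) : R :=
  (2 ^+ (t - size rho))^-1 *
  \sum_(s : t.-tuple bool | prefix rho s) (S s - S rho) ^+ 2.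

(* Var(S | rho) = lim_{t -> oo} var_approx S rho t  (meaningful when the limit
   exists as a real number). *)
Definition Var {R : realType} (S : seq bool -> R) (rho : seq bool) : R :=
  limn (var_approx S rho).

(* Main.v *)
Require Import Defs.
From HB Require Import structures.
From mathcomp Require Import all_boot all_order all_algebra.
From mathcomp Require Import all_classical all_reals all_analysis.
From mathcomp Require Import ring lra.
Import Order.TTheory GRing.Theory Num.Theory numFieldNormedType.Exports.
Local Open Scope ring_scope.

Section Aux.
Variable R : realType.

Lemma tsum0 (h : seq bool -> R) : \sum_(s : 0.-tuple bool) h s = h [::].
Proof.
rewrite (big_pred1 [tuple]); first by [].
by move=> s; symmetry; apply/eqP; exact: tuple0.
Qed.

Lemma tsumS n (h : seq bool -> R) :
  \sum_(s : n.+1.-tuple bool) h s =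
  \sum_(s : n.-tuple bool) (h (false :: s) + h (true :: s)).
Proof.
rewrite big_split /= addrC.
have -> : \sum_(s : n.-tuple bool) h (true :: s) + \sum_(s : n.-tuple bool) h (false :: s)
  = \sum_(b : bool) \sum_(s : n.-tuple bool) h (b :: s) by rewrite big_bool.
rewrite pair_big /=.
rewrite (reindex (fun p : bool * n.-tuple bool => [tuple of p.1 :: p.2])) //=.
exists (fun s : n.+1.-tuple bool => (thead s, [tuple of behead s])).
  by move=> [b s] _ /=; congr pair; apply: val_inj.
move=> s _; apply: val_inj => /=.
by case: s => -[|b s] //= _; rewrite /thead (tnth_nth false).
Qed.

Definition avgT (g : seq bool -> R) (rho : seq bool) (n : nat) : R :=
  (2 ^+ n)^-1 * \sum_(s : n.-tuple bool) g (rho ++ s).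

Lemma avgT0 g rho : avgT g rho 0 = g rho.
Proof. by rewrite /avgT (tsum0 (fun s => g (rho ++ s))) cats0 expr0 invr1 mul1r. Qed.

Lemma avgTS g rho n : avgT g rho n.+1 =
  (avgT g (rcons rho false) n + avgT g (rcons rho true) n) / 2.
Proof.
rewrite /avgT (tsumS n (fun s => g (rho ++ s))) /= big_split /=.
have e b : \sum_(i : n.-tuple bool) g (rho ++ b :: i) = \sum_(s : n.-tuple bool) g (rcons rho b ++ s).
  by apply: eq_bigr => i _; rewrite cat_rcons.
rewrite !e exprS invfM.
set a := (2 ^+ n)^-1; set X := \sum_(i : n.-tuple bool) _; set Y := \sum_(i : n.-tuple bool) _.
by ring.
Qed.

Lemma avgT_mart (S : seq bool -> R) : martingale S ->
  forall n rho, avgT S rho n = S rho.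
Proof.
move=> mS; elim=> [|n IH] rho; first by rewrite avgT0.
rewrite avgTS !IH; have [_ h] := mS rho; rewrite -h.
by rewrite mulrC mulrA mulVf ?mul1r // pnatr_eq0.
Qed.

Lemma CS (I : finType) (F : I -> R) :
  \sum_i `|F i| <= #|I|%:R * Num.sqrt ((#|I|%:R)^-1 * \sum_i F i ^+ 2).
Proof.
set N : R := #|I|%:R; set Q := \sum_i F i ^+ 2; set A : R := \sum_i `|F i|.
pose a i := `|F i|.
have aK i : a i ^+ 2 = F i ^+ 2 by rewrite /a real_normK ?num_real.
have N0 : 0 <= N by [].
have Q0 : 0 <= Q by apply: sumr_ge0 => i _; apply: sqr_ge0.
have A0 : 0 <= A by apply: sumr_ge0 => i _.
have inner i : \sum_j (a i - a j) ^+ 2 = N * a i ^+ 2 + Q - 2 * (a i * A).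
  rewrite (eq_bigr (fun j => (a i ^+ 2 + a j ^+ 2) - 2 * (a i * a j))); last by move=> j _; ring.
  rewrite sumrB big_split /= sumr_const -mulr_sumr -mulr_sumr.
  rewrite (eq_bigr _ (fun j _ => aK j)) -/Q.
  have -> : \sum_j a j = A by [].
  by rewrite /N mulr_natl.
have E : \sum_i \sum_j (a i - a j) ^+ 2 = 2 * (N * Q) - 2 * A ^+ 2.
  rewrite (eq_bigr _ (fun i _ => inner i)) sumrB big_split /= sumr_const -mulr_sumr -mulr_sumr.
  rewrite -mulr_suml (eq_bigr _ (fun j _ => aK j)) -/Q.
  have -> : \sum_i a i = A by [].
  rewrite -[Q *+ _]mulr_natl.
  change (N * Q + N * Q - 2 * (A * A) = 2 * (N * Q) - 2 * A ^+ 2).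
  by rewrite expr2; ring.
have key : A ^+ 2 <= N * Q.
  have H : 0 <= \sum_i \sum_j (a i - a j) ^+ 2.
    by apply: sumr_ge0 => i _; apply: sumr_ge0 => j _; apply: sqr_ge0.
  rewrite E in H; lra.
have [N00|Npos] := eqVneq N 0.
  move: key; rewrite N00 mul0r => k.
  have : A ^+ 2 = 0 by apply/eqP; rewrite eq_le k sqr_ge0.
  by move/eqP; rewrite sqrf_eq0 => /eqP ->; rewrite mul0r.
have -> : N * Num.sqrt (N^-1 * Q) = Num.sqrt (N * Q).
  rewrite -{1}(ger0_norm N0) -sqrtr_sqr -sqrtrM ?sqr_ge0 //.
  by congr Num.sqrt; field.
by rewrite -(ger0_norm A0) -sqrtr_sqr ler_sqrt // mulr_ge0.
Qed.

Lemma keyineq (k : nat) (S : 'I_k -> seq bool -> R) :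
  (forall j, martingale (S j)) -> forall n,
  avgT (fun rho => \big[Num.max/0]_(j < k) S j rho) [::] n <=
  \big[Num.max/0]_(j < k) S j [::] +
    2^-1 * \sum_(j < k) Num.sqrt (var_approx (S j) [::] n).
Proof.
move=> mS n.
set m0 := \big[Num.max/0]_(j < k) S j [::].
have m00 : 0 <= m0 by apply: bigmax_ge_id.
rewrite /avgT /var_approx /= subn0.
set N : R := 2 ^+ n.
have Npos : 0 < N by rewrite /N exprn_gt0.
have cardN : #|{: n.-tuple bool}|%:R = N by rewrite card_tuple card_bool natrX.
pose X j (s : seq bool) := S j s - S j [::].
have pos (x : R) : 0 <= (x + `|x|) / 2.
  by apply: divr_ge0 => //; have := ler_norm (- x); rewrite normrN; lra.
have pw (s : seq bool) : \big[Num.max/0]_(j < k) S j s <= m0 + \sum_(j < k) (X j s + `|X j s|) / 2.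
  apply: bigmax_le => [|j _]; first by apply: addr_ge0 => //; apply: sumr_ge0 => j _; apply: pos.
  have h1 : S j [::] <= m0 by apply: le_bigmax.
  have h2 : (X j s + `|X j s|) / 2 <= \sum_(i < k) (X i s + `|X i s|) / 2.
    by rewrite (bigD1 j) //= lerDl; apply: sumr_ge0 => i _; apply: pos.
  have h3 := ler_norm (X j s).
  rewrite /X in h2 h3 *; lra.
have sumX j : \sum_(s : n.-tuple bool) X j s = 0.
  have := @avgT_mart (S j) (mS j) n [::]; rewrite /avgT /= => h.
  rewrite /X sumrB sumr_const.
  have -> : \sum_(s : n.-tuple bool) S j s = N * S j [::].
    by rewrite -h mulrA divff ?mul1r // gt_eqF.
  rewrite -mulr_natl (_ : #|_|%:R = N) ?subrr //.
have step1 : \sum_(s : n.-tuple bool) \big[Num.max/0]_(j < k) S j s <=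
    N * m0 + \sum_(j < k) (\sum_(s : n.-tuple bool) `|X j s|) / 2.
  apply: (@le_trans _ _ (\sum_(s : n.-tuple bool) (m0 + \sum_(j < k) (X j s + `|X j s|) / 2))).
    by apply: ler_sum => s _; apply: pw.
  rewrite big_split /= sumr_const exchange_big /=.
  rewrite -[m0 *+ _]mulr_natl (_ : #|_|%:R = N) //.
  rewrite lerD2l le_eqVlt; apply/orP; left; apply/eqP; apply: eq_bigr => j _.
  by rewrite -mulr_suml big_split /= sumX add0r.
have step2 j : \sum_(s : n.-tuple bool) `|X j s| <=
    N * Num.sqrt ((2 ^+ n)^-1 * \sum_(s : n.-tuple bool | prefix [::] s) (S j s - S j [::]) ^+ 2).
  have := @CS _ (fun s : n.-tuple bool => X j s); rewrite cardN.
  have e : \sum_(s : n.-tuple bool | prefix [::] s) (S j s - S j [::]) ^+ 2 = \sum_(s : n.-tuple bool) X j s ^+ 2.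
    by apply: eq_bigl => s; rewrite prefix0s.
  by rewrite e.
have step3 : \sum_(j < k) (\sum_(s : n.-tuple bool) `|X j s|) / 2 <=
   N * (2^-1 * \sum_(j < k) Num.sqrt ((2 ^+ n)^-1 * \sum_(s : n.-tuple bool | prefix [::] s) (S j s - S j [::]) ^+ 2)).
  rewrite mulrA mulr_sumr.
  apply: ler_sum => j _; have := step2 j; lra.
rewrite -(ler_pM2l Npos) mulrA divff ?gt_eqF // mul1r mulrDr.
exact: le_trans step1 (lerD (lexx _) step3).
Qed.
End Aux.

Theorem lemma3p8 (R : realType) (k : nat) (S : 'I_k -> seq bool -> R) (c : R) :
  (forall j, martingale (S j)) ->
  (forall j, cvgn (var_approx (S j) [::])) ->
  \big[Num.max/0]_(j < k) S j [::] + 2^-1 * \sum_(j < k) Num.sqrt (Var (S j) [::]) < c ->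
  exists Sstar : seq bool -> R,
    [/\ martingale Sstar,
        Sstar [::] < c,
        (forall rho, \big[Num.max/0]_(j < k) S j rho < Sstar rho) &
        ((forall j, bounded_fun (S j)) -> bounded_fun Sstar)].
Proof.
move=> mS cvS hc.
pose m rho := \big[Num.max/0]_(j < k) S j rho.
have m0 rho : 0 <= m rho by apply: bigmax_ge_id.
have Sm j rho : S j rho <= m rho by apply: le_bigmax.
have msub rho : m rho <= (m (rcons rho false) + m (rcons rho true)) / 2.
  apply: bigmax_le => [|j _].
    by apply: divr_ge0 => //; apply: addr_ge0.
  have [_ h] := mS j rho.
  have := Sm j (rcons rho false); have := Sm j (rcons rho true); lra.
have msum rho : m rho <= \sum_j S j rho.
  apply: bigmax_le => [|j _].
    by apply: sumr_ge0 => j _; have [] := mS j rho.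
  by rewrite (bigD1 j) //= lerDl; apply: sumr_ge0 => i _; have [] := mS i rho.
pose f rho n := @avgT R m rho n.
have fS rho n : f rho n.+1 = (f (rcons rho false) n + f (rcons rho true) n) / 2.
  exact: avgTS.
have f0 rho : f rho 0 = m rho by apply: avgT0.
have fstep n : forall rho, f rho n <= f rho n.+1.
  elim: n => [|n IH] rho; first by rewrite fS !f0; apply: msub.
  rewrite (fS rho n.+1) (fS rho n).
  have := IH (rcons rho false); have := IH (rcons rho true); lra.
have fmono rho : nondecreasing_seq (f rho).
  by apply/nondecreasing_seqP => n; apply: fstep.
have fub n : forall rho, f rho n <= \sum_j S j rho.
  elim: n => [|n IH] rho; first by rewrite f0.
  rewrite fS; have := IH (rcons rho false); have := IH (rcons rho true).
  have -> : \sum_j S j rho = (\sum_j S j (rcons rho false) + \sum_j S j (rcons rho true)) / 2.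
    rewrite -big_split /= mulr_suml; apply: eq_bigr => j _.
    have [_ h] := mS j rho; lra.
  lra.
have fcv rho : cvgn (f rho).
  apply: cvgP; apply: nondecreasing_cvgn => //.
  by exists (\sum_j S j rho) => _ [n _ <-]; apply: fub.
pose M rho := limn (f rho).
have Mge rho n : f rho n <= M rho by apply: nondecreasing_cvgn_le.
have Mle rho : M rho <= \sum_j S j rho.
  by apply: limr_le; [exact: fcv | apply: nearW => n; apply: fub].
have Mmart rho : M rho = (M (rcons rho false) + M (rcons rho true)) / 2.
  apply: (cvg_lim (@Rhausdorff R)); rewrite -cvg_shiftS.
  have -> : [sequence f rho n.+1]_n = (fun n => (f (rcons rho false) n + f (rcons rho true) n) / 2).
    by apply/funext => n; rewrite /= fS.
  apply: cvgMr_tmp; apply: cvgD; [exact: fcv | exact: fcv].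
have M0 : M [::] <= \big[Num.max/0]_(j < k) S j [::] + 2^-1 * \sum_(j < k) Num.sqrt (Var (S j) [::]).
  pose g n := m [::] + 2^-1 * \sum_(j < k) Num.sqrt (var_approx (S j) [::] n).
  have gcv : (g @ \oo --> (m [::] + 2^-1 * \sum_(j < k) Num.sqrt (Var (S j) [::])))%classic.
    apply: cvgD; first exact: cvg_cst.
    apply: cvgMl_tmp.
    apply: cvg_big => //; first exact: add_continuous.
    move=> j _.
    apply: (@continuous_cvg _ _ _ _ _ (var_approx (S j) [::]) Num.sqrt); first exact: sqrt_continuous.
    exact: cvS.
  rewrite -(cvg_lim (@Rhausdorff R) gcv).
  apply: ler_lim; [exact: fcv | exact: cvgP gcv | apply: nearW => n].
  exact: (@keyineq R k S mS n).
pose eps := (c - M [::]) / 2.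
have eps0 : 0 < eps by rewrite /eps; lra.
have Mm rho : m rho <= M rho by have := Mge rho 0; rewrite f0.
exists (fun rho => M rho + eps); split.
- move=> rho; split; first by have := Mm rho; have := m0 rho; lra.
  by have := Mmart rho; lra.
- by rewrite /eps; lra.
- by move=> rho; have h := Mm rho; rewrite /m in h; lra.
move=> hb.
have hB j : exists B : R, forall x, `|S j x| <= B.
  move: (hb j) => [M' [_ HM]]; exists (`|M'| + 1) => x.
  have lt : M' < `|M'| + 1 by rewrite (le_lt_trans (ler_norm _)) ?ltrDl.
  exact: (HM _ lt x).
have [B hB'] := boolp.choice hB.
exists (\sum_j B j + eps); split; first exact: num_real.
move=> M' hM' x _ /=.
have h1 := Mle x.
have h2 : \sum_j S j x <= \sum_j B j.
  by apply: ler_sum => j _; apply: le_trans (ler_norm _) (hB' j x).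
have h3 := Mm x; have h4 := m0 x.
rewrite ger0_norm; lra.
Qed.
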